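(* Let $\mathcal C=(\Lambda+\mathbf t)\cap\triangle_n^{q-1}$ be a linear multiset code with $d_1(\mathcal C)>h$, where $\Lambda\subseteq A_{q-1}$ is a lattice and $\mathbf t\in\mathbb Z^q$ satisfies $\sum_i t_i=n$ and $t_i\ge h$ for all $i\in[q]$. Then there exist an Abelian group $G$, a $B_h$ set $B=\{b_0,\dots,b_{q-1}\}\subseteq G$ and $b\in G$ such that $\mathcal C=\{\mathbf x\in\triangle_n^{q-1}:\sum_{i=0}^{q-1}x_ib_i=b\}$.
   Context: $[q]=\{0,\dots,q-1\}$; $\triangle_n^{q-1}=\{\mathbf x\in\mathbb Z^q:x_i\ge0,\sum_ix_i=n\}$; $A_{q-1}=\{\mathbf x\in\mathbb Z^q:\sum_ix_i=0\}$; a lattice is a subgroup of $(\mathbb Z^q,+)$. A multiset code is a subset of $\triangle_n^{q-1}$ with at least two elements; it is linear if it equals $(\Lambda+\mathbf t)\cap\triangle_n^{q-1}$ for some lattice $\Lambda\subseteq A_{q-1}$ and $\mathbf t\in\mathbb Z^q$ with $\sum_it_i=n$. $d_1(\mathbf x,\mathbf y)=\frac12\sum_i|x_i-y_i|$, $d_1(\mathcal C)$ the minimum distance. A set $\{b_0,\dots,b_{q-1}\}$ in an Abelian group is a $B_h$ set if the sums $b_{i_1}+\dots+b_{i_h}$, $0\le i_1\le\dots\le i_h\le q-1$, are pairwise different; $x_ib_i$ denotes the $x_i$-fold sum in $G$ (with $-b_i$ for negative $x_i$). *)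

(* Defs.v *)
From HB Require Import structures.
From mathcomp Require Import all_boot all_order all_algebra.
Set Implicit Arguments. Unset Strict Implicit. Unset Printing Implicit Defensive.
Import Order.TTheory GRing.Theory Num.Theory.
Local Open Scope ring_scope.

Notation zvec q := {ffun 'I_q -> int}.

Definition in_simplex (q n : nat) (x : zvec q) : Prop :=
  (forall i, 0 <= x i) /\ \sum_(i < q) x i = n%:Z.

Definition in_A (q : nat) (x : zvec q) : Prop := \sum_(i < q) x i = 0.

Definition is_lattice (q : nat) (L : zvec q -> Prop) : Prop :=
  L 0 /\ (forall x y, L x -> L y -> L (x - y)).

Definition lin_code (q n : nat) (L : zvec q -> Prop) (t : zvec q) (x : zvec q) : Prop :=
  in_simplex n x /\ L (x - t).

Definition d1 (q : nat) (x y : zvec q) : rat :=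
  (\sum_(i < q) `|x i - y i|)%:~R / 2.

Definition min_dist_gt (q : nat) (C : zvec q -> Prop) (h : nat) : Prop :=
  forall x y, C x -> C y -> x <> y -> h%:R < d1 x y.

Definition Bh_set (G : zmodType) (q h : nat) (b : 'I_q -> G) : Prop :=
  forall s t : h.-tuple 'I_q,
    sorted (fun i j : 'I_q => (i <= j)%N) s ->
    sorted (fun i j : 'I_q => (i <= j)%N) t ->
    \sum_(j < h) b (tnth s j) = \sum_(j < h) b (tnth t j) -> s = t.

(* Main.v *)
Require Import Defs.
From HB Require Import structures.
From mathcomp Require Import all_boot all_order all_algebra.
From mathcomp Require Import boolp zify ring lra.
Import Order.TTheory GRing.Theory Num.Theory.
Local Open Scope ring_scope.
Set Implicit Arguments. Unset Strict Implicit.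
Record Lat (q : nat) := MkLat { Lp : zvec q -> Prop; Lp_lat : is_lattice Lp }.

Section Quot.
Variables (q : nat) (LL : Lat q).
Let L := Lp LL.
Lemma L0 : L 0. Proof. exact: (Lp_lat LL).1. Qed.
Lemma LB x y : L x -> L y -> L (x - y). Proof. exact: (Lp_lat LL).2. Qed.
Lemma LN x : L x -> L (- x). Proof. by move=> Hx; rewrite -sub0r; apply: LB => //; apply: L0. Qed.
Lemma LD x y : L x -> L y -> L (x + y).
Proof. by move=> Hx Hy; rewrite -(opprK y); apply: LB => //; apply: LN. Qed.

Definition canon (x : zvec q) : zvec q := choose (fun y => `[< L (y - x) >]) x.
Lemma canonP x : L (canon x - x).
Proof. have := @chooseP _ (fun y => `[< L (y - x) >]) x; rewrite /canon; move=> H; apply/asboolP; apply: H; apply/asboolP; rewrite subrr; exact: L0. Qed.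
Lemma canon_eq x y : L (x - y) -> canon x = canon y.
Proof.
move=> Hxy; rewrite /canon.
rewrite (@choose_id _ _ x y); last by apply/asboolP; rewrite -opprB; apply: LN.
  2: by apply/asboolP; rewrite subrr; exact: L0.
apply: eq_choose => z; apply/asboolP/asboolP => H.
  have -> : z - y = (z - x) + (x - y) by rewrite addrA subrK.
  by apply: LD.
have -> : z - x = (z - y) - (x - y) by rewrite opprB addrA subrK.
by apply: LB.
Qed.
Lemma canon_idem x : canon (canon x) = canon x.
Proof. apply: canon_eq; exact: canonP. Qed.
Lemma canon_eqP x y : canon x = canon y <-> L (x - y).
Proof.
split; last exact: canon_eq.
move=> E. have -> : x - y = (canon y - y) - (canon x - x).
  by rewrite E opprB [RHS]addrC [RHS]addrA subrK.
by apply: LB; apply: canonP.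
Qed.

Definition QT := {x : zvec q | canon x == x}.
HB.instance Definition _ := [isSub for (@sval _ (fun x => canon x == x)) : QT -> zvec q].
HB.instance Definition _ := [Choice of QT by <:].
Definition piL (x : zvec q) : QT := exist _ (canon x) (introT eqP (canon_idem x)).
Definition qzero := piL 0.
Definition qadd (a b : QT) := piL (val a + val b).
Definition qopp (a : QT) := piL (- val a).
Lemma piK (a : QT) : piL (val a) = a.
Proof. apply: val_inj => /=; exact: (eqP (valP a)). Qed.
Lemma pi_eq x y : L (x - y) -> piL x = piL y.
Proof. by move=> H; apply: val_inj => /=; apply: canon_eq. Qed.
Lemma qaddE x y : qadd (piL x) (piL y) = piL (x + y).
Proof.
apply: pi_eq => /=.
have -> : canon x + canon y - (x + y) = (canon x - x) + (canon y - y).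
  by rewrite opprD addrACA.
by apply: LD; apply: canonP.
Qed.
Lemma qoppE x : qopp (piL x) = piL (- x).
Proof. apply: pi_eq => /=; rewrite -opprD; apply: LN; apply: canonP. Qed.
Lemma qaddA : associative qadd.
Proof. move=> a b c; rewrite -(piK a) -(piK b) -(piK c) !qaddE; by rewrite addrA. Qed.
Lemma qaddC : commutative qadd.
Proof. move=> a b; rewrite -(piK a) -(piK b) !qaddE; by rewrite addrC. Qed.
Lemma qadd0 : left_id qzero qadd.
Proof. move=> a; rewrite -(piK a) /qzero qaddE; by rewrite add0r. Qed.
Lemma qaddN : left_inverse qzero qopp qadd.
Proof. move=> a; rewrite -(piK a) qoppE qaddE; by rewrite addNr. Qed.
HB.instance Definition _ := GRing.isZmodule.Build QT qaddA qaddC qadd0 qaddN.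
Lemma pi_morph : zmod_morphism piL.
Proof. by move=> x y; change (piL (x - y) = qadd (piL x) (qopp (piL y))); rewrite qoppE qaddE. Qed.
HB.instance Definition _ := GRing.isZmodMorphism.Build _ _ piL pi_morph.
Lemma piLP x y : piL x = piL y <-> L (x - y).
Proof. split; last exact: pi_eq. by move/(congr1 val) => /= /canon_eqP. Qed.
End Quot.
Definition ev q (k : 'I_q) : zvec q := [ffun j => ((k == j) : nat)%:Z].
Definition cnt q (r : seq 'I_q) : zvec q := [ffun i => (count_mem i r)%:Z].

Lemma sum_ev q (k : 'I_q) : \sum_i ev k i = 1.
Proof.
rewrite (bigD1 k) //= ffunE eqxx big1 ?addr0 // => i ik.
by rewrite ffunE eq_sym (negbTE ik).
Qed.

Lemma cnt_sum q (r : seq 'I_q) : \sum_(x <- r) ev x = cnt r.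
Proof.
elim: r => [|x r IH].
  by rewrite big_nil; apply/ffunP => i; rewrite !ffunE.
rewrite big_cons IH; apply/ffunP => i; rewrite !ffunE /=.
by rewrite PoszD.
Qed.

Lemma cnt_cons q (x : 'I_q) r i : cnt (x :: r) i = ev x i + cnt r i.
Proof. by rewrite !ffunE /= PoszD. Qed.

Lemma sum_cnt q (r : seq 'I_q) : \sum_i cnt r i = (size r)%:Z.
Proof.
elim: r => [|x r IH].
  by rewrite big1 // => i _; rewrite ffunE.
under eq_bigr do rewrite cnt_cons.
by rewrite big_split /= sum_ev IH -addn1 PoszD addrC.
Qed.

Lemma cnt_le q (r : seq 'I_q) i : cnt r i <= (size r)%:Z.
Proof. by rewrite ffunE lez_nat count_size. Qed.

Lemma cnt_ge q (r : seq 'I_q) i : 0 <= cnt r i.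
Proof. by rewrite ffunE. Qed.

Lemma decomp q (x : zvec q) : x = \sum_i ev i *~ x i.
Proof.
apply/ffunP => j; rewrite sum_ffunE (bigD1 j) //= ffunMzE ffunE eqxx big1 ?addr0.
  by rewrite mulrzz mul1r.
move=> i ij; rewrite ffunMzE ffunE (negbTE ij) /=; exact: mul0rz.
Qed.
Theorem mainTheorem14 (q n h : nat) (L : zvec q -> Prop) (t : zvec q) :
  is_lattice L -> (forall x, L x -> in_A x) ->
  \sum_(i < q) t i = n%:Z -> (forall i, h%:Z <= t i) ->
  (exists x y, lin_code n L t x /\ lin_code n L t y /\ x <> y) ->
  min_dist_gt (lin_code n L t) h ->
  exists (G : zmodType) (b : 'I_q -> G) (b0 : G),
    Bh_set h b /\
    forall x : zvec q,
      lin_code n L t x <-> (in_simplex n x /\ \sum_(i < q) (b i *~ x i) = b0).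
Proof.
move=> Hlat HA Ht Hth _ Hmd.
pose LL := MkLat Hlat.
have phiE (x : zvec q) : \sum_i (piL LL (ev i)) *~ x i = piL LL x.
  by rewrite {2}(decomp x) raddf_sum; apply: eq_bigr => i _; rewrite raddfMz.
have L0' : L 0 := Hlat.1.
have LB' : forall x y, L x -> L y -> L (x - y) := Hlat.2.
exists (QT LL), (fun i => piL LL (ev i)), (piL LL t); split; last first.
  move=> x; rewrite phiE; split.
    case=> H1 H2; split => //; exact: (proj2 (piLP LL x t) H2).
  by case=> H1 H2; split => //; exact: (proj1 (piLP LL x t) H2).
move=> s u ss su Heq.
have sumE (r : h.-tuple 'I_q) : \sum_(j<h) piL LL (ev (tnth r j)) = piL LL (cnt r).
  by rewrite -raddf_sum -cnt_sum big_tuple.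
move: Heq; rewrite !sumE => /(piLP LL) Hsu; change (L (cnt s - cnt u)) in Hsu.
pose x2 := t - cnt s + cnt u.
have x2E i : x2 i = t i - cnt s i + cnt u i by rewrite !ffunE.
have Ct : lin_code n L t t.
  split; last by rewrite subrr.
  split => // i; apply: le_trans (Hth i); done.
have Cx2 : lin_code n L t x2.
  split; last first.
    have -> : x2 - t = 0 - (cnt s - cnt u).
      by apply/ffunP => i; rewrite !ffunE; ring.
    by apply: LB'.
  split.
    move=> i; rewrite x2E; have := Hth i; have := cnt_le s i; have := cnt_ge u i.
    rewrite size_tuple; lia.
  under eq_bigr do rewrite x2E.
  rewrite big_split /= sumrB Ht !sum_cnt !size_tuple; ring.
have ceq : cnt s = cnt u.
  case: (eqVneq x2 t) => [E|ne].
    apply/ffunP => i; have := congr1 (fun f : zvec q => f i) E; rewrite /= x2E; lia.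
  have ne' : t <> x2 by move=> E; rewrite E eqxx in ne.
  have := Hmd _ _ Ct Cx2 ne'.
  rewrite /d1.
  have Hb : \sum_(i < q) `|t i - x2 i| <= (h + h)%:Z.
    apply: le_trans (_ : \sum_i (cnt s i + cnt u i) <= _).
      apply: ler_sum => i _; rewrite x2E.
      have := cnt_ge s i; have := cnt_ge u i.
      have -> : t i - (t i - cnt s i + cnt u i) = cnt s i - cnt u i by ring.
      move=> h1 h2; rewrite ler_norml; apply/andP; split; lia.
    by rewrite big_split /= !sum_cnt !size_tuple PoszD.
  move: Hb; set S := \sum_(i < q) _ => Hb.
  have HbR : (S%:~R : rat) <= (h + h)%:R.
    by rewrite -(ler_int rat) in Hb; rewrite (le_trans Hb) // natrD.
  rewrite natrD in HbR; move=> Hlt; exfalso; clear -Hlt HbR; lra.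
apply: val_inj; apply: (sorted_eq (leT := fun i j : 'I_q => (i <= j)%N)) => //.
- by move=> a b c; apply: leq_trans.
- by move=> a b /andP[ab ba]; apply: val_inj; apply/eqP; rewrite eqn_leq ab ba.
rewrite /perm_eq; apply/allP => i _ /=; apply/eqP.
have := congr1 (fun f : zvec q => f i) ceq; rewrite /= !ffunE; by case.
Qed.
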